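(* Fix any total budget $\mathrm{TB}\in\mathbb N_0$. For every integer $n\in\mathbb Z$, the integer game form $n$ satisfies $n=\{n-1\mid n+1\}$, where $n-1$ and $n+1$ denote the corresponding integer game forms.
   Context: Game forms are defined recursively: $G=\{G^{\mathcal L}\mid G^{\mathcal R}\}$ with finite sets of Left and Right options, and finite birthday. Integer game forms: $0=\{\varnothing\mid\varnothing\}$; for $n\in\mathbb N$, $n=\{n-1\mid\varnothing\}$ and $-n=\bar n=\{\varnothing\mid -(n-1)\}$, where the conjugate is $\bar G=\{\overline{G^{\mathcal R}}\mid\overline{G^{\mathcal L}}\}$. The budget set for total budget $\mathrm{TB}$ is $\mathcal B=\{0,\dots,\mathrm{TB},\hat 0,\dots,\widehat{\mathrm{TB}}\}$: state $p$ (resp. $\hat p$) means Left holds $p$ dollars and Right holds $\mathrm{TB}-p$, and Right (resp. Left) holds the tie-breaking marker. Play of $(G,\tilde p)$: at every position (terminal ones included) both players bid simultaneously, Left $\ell\in\{0,\dots,p\}$, Right $r\in\{0,\dots,\mathrm{TB}-p\}$. If Left holds the marker (state $\hat p$): if $\ell>r$ Left moves to $(G^L,\widehat{p-\ell})$, or, including the marker (allowed when $\ell\ge r$), to $(G^L,p-\ell)$; if $\ell=r$ Left wins, the marker passes to Right, play continues at $(G^L,p-\ell)$; if $\ell<r$ Right moves to $(G^R,\widehat{p+r})$. Symmetrically when Right holds the marker (state $p$): if $r>\ell$ Right moves to $(G^R,p+r)$ or, including the marker, to $(G^R,\widehat{p+r})$; if $r=\ell$ Right wins, the marker passes to Left,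 play continues at $(G^R,\widehat{p+r})$; if $r<\ell$ Left moves to $(G^L,p-\ell)$. A player who wins a bid but has no option loses. $o(G,\tilde p)\in\{\mathrm L,\mathrm R\}$ is the winner under optimal play; $\mathrm L>\mathrm R$. Disjunctive sum $G+H=\{G^{\mathcal L}+H,G+H^{\mathcal L}\mid G^{\mathcal R}+H,G+H^{\mathcal R}\}$. $G\ge H$ means $o(G+X,\tilde p)\ge o(H+X,\tilde p)$ for all game forms $X$ and all $\tilde p\in\mathcal B$; $G=H$ means $G\ge H$ and $H\ge G$. *)

(* Defs.v *)
From Stdlib Require Import List Arith ZArith Bool.
Import ListNotations.

(* Game forms: finite lists of Left and Right options; finite birthday is
   automatic for an inductive type. *)
Inductive game : Type := Game : list game -> list game -> game.

Fixpoint conjg (G : game) : game :=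
  match G with Game GL GR => Game (map conjg GR) (map conjg GL) end.

Fixpoint gadd (G : game) : game -> game :=
  fix gaddG (H : game) : game :=
    match G, H with
    | Game GL GR, Game HL HR =>
        Game (map (fun g => gadd g H) GL ++ map (fun h => gaddG h) HL)
             (map (fun g => gadd g H) GR ++ map (fun h => gaddG h) HR)
    end.

Fixpoint nat_game (n : nat) : game :=
  match n with
  | O => Game [] []
  | S k => Game [nat_game k] []
  end.

Definition int_game (z : Z) : game :=
  match z with
  | Z0 => nat_game 0
  | Zpos k => nat_game (Pos.to_nat k)
  | Zneg k => conjg (nat_game (Pos.to_nat k))
  end.

(* Budget state (p, m): Left holds p dollars, Right holds TB - p;
   m = true means Left holds the tie-breaking marker (state \hat p),
   m = false means Right holds it (state p).
   outcome TB G p m = true iff Left wins (G, state) under optimal play: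
   Left has a bid l in {0..p} such that for every Right bid r in {0..TB-p}
   the continuation (chosen optimally by the winner of the bid) is won by
   Left.  A bid winner without options loses. *)
Fixpoint outcome (TB : nat) (G : game) (p : nat) (m : bool) {struct G} : bool :=
  match G with
  | Game GL GR =>
      existsb (fun l =>
        forallb (fun r =>
          if m then
            if r <? l then
              (* Left wins; may keep the marker or hand it over *)
              existsb (fun g => outcome TB g (p - l) true
                                || outcome TB g (p - l) false) GL
            else if l =? r then
              (* tie: Left wins, marker passes to Right *)
              existsb (fun g => outcome TB g (p - l) false) GL
            else
              (* Right wins the bid, pays r to Left *)
              forallb (fun g => outcome TB g (p + r) true) GR
          else
            if l <? r then
              forallb (fun g => outcome TB g (p + r) false
                                && outcome TB g (p + r) true) GR
            else if l =? r then
              forallb (fun g => outcome TB g (p + r) true) GR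
            else
              existsb (fun g => outcome TB g (p - l) false) GL)
          (seq 0 (S (TB - p))))
        (seq 0 (S p))
  end.

Definition game_ge (TB : nat) (G H : game) : Prop :=
  forall (X : game) (p : nat) (m : bool), p <= TB ->
    outcome TB (gadd H X) p m = true -> outcome TB (gadd G X) p m = true.

Definition game_eq (TB : nat) (G H : game) : Prop :=
  game_ge TB G H /\ game_ge TB H G.

(* Main.v *)
Require Import Defs.
From Stdlib Require Import List ZArith Arith Lia Bool.
Import ListNotations.

Definition game_ind' (P : game -> Prop)
  (H : forall GL GR, (forall g, In g GL -> P g) -> (forall g, In g GR -> P g) -> P (Game GL GR)) :
  forall g, P g :=
  fix F g := match g with Game GL GR =>
    H GL GR
     ((fix FL (l : list game) : forall x, In x l -> P x :=
        match l as l0 return forall x, In x l0 -> P x with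
        | [] => fun x Hin => False_ind _ Hin
        | a :: t => fun x Hin => match Hin with
                     | or_introl e => eq_ind a P (F a) x e
                     | or_intror h => FL t x h end end) GL)
     ((fix FL (l : list game) : forall x, In x l -> P x :=
        match l as l0 return forall x, In x l0 -> P x with
        | [] => fun x Hin => False_ind _ Hin
        | a :: t => fun x Hin => match Hin with
                     | or_introl e => eq_ind a P (F a) x e
                     | or_intror h => FL t x h end end) GR)
  end.

Definition stepf (o : game -> nat -> bool -> bool) (GL GR : list game) (p : nat) (m : bool) (l r : nat) : bool :=
  if m then
    if r <? l then existsb (fun g => o g (p - l) true || o g (p - l) false) GL
    else if l =? r then existsb (fun g => o g (p - l) false) GL
    else forallb (fun g => o g (p + r) true) GR
  else
    if l <? r then forallb (fun g => o g (p + r) false && o g (p + r) true) GR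
    else if l =? r then forallb (fun g => o g (p + r) true) GR
    else existsb (fun g => o g (p - l) false) GL.

Lemma outcome_eq TB GL GR p m : outcome TB (Game GL GR) p m =
  existsb (fun l => forallb (fun r => stepf (outcome TB) GL GR p m l r) (seq 0 (S (TB - p)))) (seq 0 (S p)).
Proof. reflexivity. Qed.

Lemma gadd_eq GL GR XL XR : gadd (Game GL GR) (Game XL XR) =
  Game (map (fun g => gadd g (Game XL XR)) GL ++ map (fun h => gadd (Game GL GR) h) XL)
       (map (fun g => gadd g (Game XL XR)) GR ++ map (fun h => gadd (Game GL GR) h) XR).
Proof. reflexivity. Qed.

Lemma out_true TB GL GR p m : outcome TB (Game GL GR) p m = true <->
  exists l, l <= p /\ forall r, r <= TB - p -> stepf (outcome TB) GL GR p m l r = true.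
Proof.
  rewrite outcome_eq, existsb_exists. split.
  - intros [l [Hl H]]. apply in_seq in Hl. exists l. split; [lia|].
    intros r Hr. rewrite forallb_forall in H. apply H, in_seq. lia.
  - intros [l [Hl H]]. exists l. split; [apply in_seq; lia|].
    apply forallb_forall. intros r Hr. apply in_seq in Hr. apply H. lia.
Qed.

Lemma forallb_false_ex {A} (f : A -> bool) l : forallb f l = false -> exists x, In x l /\ f x = false.
Proof.
  induction l as [|a t IH]; simpl; [discriminate|].
  destruct (f a) eqn:E; simpl; intros H; [destruct (IH H) as [x [? ?]]; eauto| eauto].
Qed.

Lemma out_false TB GL GR p m : outcome TB (Game GL GR) p m = false ->
  forall l, l <= p -> exists r, r <= TB - p /\ stepf (outcome TB) GL GR p m l r = false.
Proof.
  intros H l Hl. destruct (forallb (fun r => stepf (outcome TB) GL GR p m l r) (seq 0 (S (TB - p)))) eqn:E.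
  - exfalso. assert (outcome TB (Game GL GR) p m = true); [|congruence].
    rewrite outcome_eq, existsb_exists. exists l. split; [apply in_seq; lia| exact E].
  - apply forallb_false_ex in E. destruct E as [r [Hr E]]. apply in_seq in Hr. exists r. split; [lia|exact E].
Qed.

Lemma step_gen (o1 o2 : game -> nat -> bool -> bool) GL1 GR1 GL2 GR2 p1 p2 m l r :
  stepf o1 GL1 GR1 p1 m l r = true ->
  (forall g m', In g GL1 -> o1 g (p1 - l) m' = true -> exists h, In h GL2 /\ o2 h (p2 - l) m' = true) ->
  (forall h m', In h GR2 -> (m = true -> m' = true) -> (forall g, In g GR1 -> o1 g (p1 + r) m' = true) -> o2 h (p2 + r) m' = true) ->
  stepf o2 GL2 GR2 p2 m l r = true.
Proof.
  intros S HL HR. unfold stepf in *.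
  destruct m; destruct (r <? l); destruct (l =? r); destruct (l <? r);
  repeat match goal with
  | H : existsb _ _ = true |- _ => apply existsb_exists in H; destruct H as [? [? ?]]
  | |- forallb _ _ = true => apply forallb_forall; intros ? ?
  | H : forallb _ _ = true |- _ => rewrite forallb_forall in H
  end; try (apply orb_true_iff in H0; destruct H0);
  try solve [ apply existsb_exists;
      match goal with Hin : In ?g _, Ho : o1 ?g ?q ?mm = true |- _ =>
        destruct (HL g mm Hin Ho) as [h [? ?]]; exists h; split; auto; try (apply orb_true_iff; auto) end ];
  try solve [ apply HR; auto; intros; match goal with H : forall x, In x _ -> _ |- _ => specialize (H _ ltac:(eassumption)) end; auto ];
  try solve [ apply andb_true_iff; split; apply HR; auto; try discriminate; intros g Hg;
      match goal with H : forall x, In x _ -> _ |- _ => specialize (H _ Hg); apply andb_true_iff in H; tauto end ].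
Qed.

Lemma step_gen_false (o1 o2 : game -> nat -> bool -> bool) GL1 GR1 GL2 GR2 p1 p2 m l r :
  stepf o1 GL1 GR1 p1 m l r = false ->
  (forall g m', In g GR1 -> o1 g (p1 + r) m' = false -> exists h, In h GR2 /\ o2 h (p2 + r) m' = false) ->
  (forall h m', In h GL2 -> (m' = true -> m = true) -> (forall g, In g GL1 -> o1 g (p1 - l) m' = false) -> o2 h (p2 - l) m' = false) ->
  stepf o2 GL2 GR2 p2 m l r = false.
Proof.
  intros S HR HL. unfold stepf in *.
  destruct m; destruct (r <? l); destruct (l =? r); destruct (l <? r);
  repeat match goal with
  | H : forallb _ _ = false |- _ => apply forallb_false_ex in H; destruct H as [? [? ?]]
  | |- existsb _ _ = false => apply not_true_iff_false; rewrite existsb_exists; intros [? [? ?]]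
  | H : existsb _ _ = false |- _ => rewrite <- not_true_iff_false, existsb_exists in H
  end;
  try solve [ apply not_true_iff_false; rewrite forallb_forall; intros Hall;
      match goal with Hin : In ?g _, Ho : o1 ?g ?q ?mm = false |- _ =>
        destruct (HR g mm Hin Ho) as [h [Hh Hh2]]; specialize (Hall h Hh); congruence end ];
  try solve [ apply not_true_iff_false; rewrite forallb_forall; intros Hall;
      match goal with Hin : In ?g _, Ho : (o1 ?g ?q false && o1 ?g ?q true) = false |- _ =>
        apply andb_false_iff in Ho; destruct Ho as [Ho|Ho];
        destruct (HR g _ Hin Ho) as [h [Hh Hh2]]; specialize (Hall h Hh); apply andb_true_iff in Hall; 
        destruct Hall; congruence end ];
  match goal with Sx : ~ (exists x, In x _ /\ _), Hin : In ?h GL2 |- False =>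
    assert (Ef : o2 h (p2 - l) false = false) by
      (apply HL; auto; intros g Hg; apply not_true_iff_false; intros Hc; apply Sx; exists g; split; auto;
       try (apply orb_true_iff; auto));
    try assert (Et : o2 h (p2 - l) true = false) by
      (apply HL; auto; intros g Hg; apply not_true_iff_false; intros Hc; apply Sx; exists g; split; auto;
       try (apply orb_true_iff; auto));
    rewrite ?Ef, ?Et in *; simpl in *; discriminate
  end.
Qed.

Inductive sim : game -> game -> Prop :=
  sim_intro GL GR HL HR :
    (forall h, In h HL -> exists g, In g GL /\ sim g h) ->
    (forall g, In g GR -> exists h, In h HR /\ sim g h) ->
    sim (Game GL GR) (Game HL HR).

Lemma sim_out TB G : forall H p m, sim G H -> outcome TB H p m = true -> outcome TB G p m = true.
Proof.
  induction G as [GL GR IHL IHR] using game_ind'.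
  intros H p m Hs. inversion Hs as [? ? HL HR SL SR]; subst.
  rewrite !out_true. intros [l [Hl Hr]]. exists l. split; auto.
  intros r Hr'. eapply step_gen; [apply Hr, Hr'| |].
  - intros g m' Hg Ho. destruct (SL g Hg) as [h [Hh Hs']]. exists h. split; auto. eapply IHL; eauto.
  - intros h m' Hh _ Hall. destruct (SR h Hh) as [g [Hg Hs']]. eapply IHR; eauto.
Qed.

Lemma mono TB Y : forall p q m, p <= q -> outcome TB Y p m = true -> outcome TB Y q m = true.
Proof.
  induction Y as [GL GR IHL IHR] using game_ind'.
  intros p q m Hpq. rewrite !out_true. intros [l [Hl Hr]]. exists l. split; [lia|].
  intros r Hr'. eapply step_gen; [apply Hr; lia| |].
  - intros g m' Hg Ho. exists g. split; auto. eapply IHL; [eauto| |eauto]. lia.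
  - intros h m' Hh _ Hall. eapply IHR; [eauto| |eauto]. lia.
Qed.

Lemma sim_refl G : sim G G.
Proof.
  induction G as [GL GR IHL IHR] using game_ind'. constructor; eauto.
Qed.

Lemma sim_add G : forall H X, sim G H -> sim (gadd G X) (gadd H X).
Proof.
  induction G as [GL GR IHL IHR] using game_ind'.
  intros H X Hs. inversion Hs as [? ? HL HR SL SR]; subst.
  induction X as [XL XR IXL IXR] using game_ind'.
  rewrite !gadd_eq. constructor.
  - intros h Hh. apply in_app_or in Hh. destruct Hh as [Hh|Hh]; apply in_map_iff in Hh; destruct Hh as [x [<- Hx]].
    + destruct (SL x Hx) as [g [Hg Hs']]. exists (gadd g (Game XL XR)). split.
      * apply in_or_app; left; apply in_map_iff; eauto.
      * apply IHL; auto.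
    + exists (gadd (Game GL GR) x). split; [apply in_or_app; right; apply in_map_iff; eauto| apply IXL; auto].
  - intros h Hh. apply in_app_or in Hh. destruct Hh as [Hh|Hh]; apply in_map_iff in Hh; destruct Hh as [x [<- Hx]].
    + destruct (SR x Hx) as [g [Hg Hs']]. exists (gadd g (Game XL XR)). split.
      * apply in_or_app; left; apply in_map_iff; eauto.
      * apply IHR; auto.
    + exists (gadd (Game HL HR) x). split; [apply in_or_app; right; apply in_map_iff; eauto| apply IXR; auto].
Qed.

Lemma sim_nat k : sim (nat_game (S k)) (nat_game k).
Proof.
  induction k; simpl; constructor; simpl; try tauto.
  intros h [<-|[]]. exists (nat_game (S k)). simpl. auto.
Qed.

Lemma sim_conj k : sim (conjg (nat_game k)) (conjg (nat_game (S k))).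
Proof.
  induction k; simpl; constructor; simpl; try tauto.
  intros g [<-|[]]. exists (conjg (nat_game (S k))). simpl. auto.
Qed.

Lemma L2gen TB YL' YR' Y p : sim (Game YL' YR') Y -> (exists y0, In y0 YL' /\ sim y0 Y) ->
  outcome TB Y p false = true -> outcome TB (Game YL' YR') p true = true.
Proof.
  destruct Y as [YL YR]. intros Hs [y0 [Hy0 Hs0]] Ho.
  inversion Hs as [? ? ? ? SL SR]; subst.
  pose proof Ho as Ho'.
  rewrite out_true in Ho. destruct Ho as [l [Hl Hr]].
  rewrite out_true. exists l. split; auto. intros r Hr'.
  assert (Left : 1 <= l -> existsb (fun g => outcome TB g (p - l) false) YL' = true).
  { intros Hl1. specialize (Hr 0 ltac:(lia)). unfold stepf in Hr.
    destruct (l <? 0) eqn:E1; [apply Nat.ltb_lt in E1; lia|].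
    destruct (l =? 0) eqn:E2; [apply Nat.eqb_eq in E2; lia|].
    apply existsb_exists in Hr. destruct Hr as [h [Hh Hoh]].
    destruct (SL h Hh) as [g [Hg Hsg]]. apply existsb_exists. exists g. split; auto.
    eapply sim_out; eauto. }
  unfold stepf.
  destruct (r <? l) eqn:E1.
  - apply Nat.ltb_lt in E1. specialize (Left ltac:(lia)).
    apply existsb_exists in Left. destruct Left as [g [Hg Hog]].
    apply existsb_exists. exists g. rewrite Hog, orb_true_r. auto.
  - apply Nat.ltb_ge in E1. destruct (l =? r) eqn:E2.
    + apply Nat.eqb_eq in E2. destruct l as [|l'].
      * apply existsb_exists. exists y0. split; auto. rewrite Nat.sub_0_r. eapply sim_out; eauto.
      * apply Left. lia.
    + apply Nat.eqb_neq in E2. specialize (Hr r Hr'). unfold stepf in Hr.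
      destruct (l <? r) eqn:E3; [|apply Nat.ltb_ge in E3; lia].
      rewrite forallb_forall in Hr. apply forallb_forall. intros g Hg.
      destruct (SR g Hg) as [h [Hh Hsh]]. specialize (Hr h Hh). apply andb_true_iff in Hr.
      eapply sim_out; eauto. tauto.
Qed.

Lemma L2R TB Y YL'' YR'' p : sim Y (Game YL'' YR'') -> (exists y0, In y0 YR'' /\ sim Y y0) ->
  outcome TB (Game YL'' YR'') p false = true -> outcome TB Y p true = true.
Proof.
  destruct Y as [YL YR]. intros Hs [y0 [Hy0 Hs0]] Ho.
  inversion Hs as [? ? ? ? SL SR]; subst.
  destruct (outcome TB (Game YL YR) p true) eqn:E; auto. exfalso.
  rewrite out_true in Ho. destruct Ho as [l [Hl Hr]].
  destruct (out_false _ _ _ _ _ E l Hl) as [r [Hr' Es]].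
  unfold stepf in Es.
  destruct (r <? l) eqn:E1.
  - apply Nat.ltb_lt in E1. specialize (Hr r Hr'). unfold stepf in Hr.
    destruct (l <? r) eqn:E3; [apply Nat.ltb_lt in E3; lia|].
    destruct (l =? r) eqn:E4; [apply Nat.eqb_eq in E4; lia|].
    apply existsb_exists in Hr. destruct Hr as [h [Hh Hoh]].
    destruct (SL h Hh) as [g [Hg Hsg]].
    rewrite <- not_true_iff_false, existsb_exists in Es. apply Es. exists g. split; auto.
    apply orb_true_iff. right. eapply sim_out; eauto.
  - apply Nat.ltb_ge in E1. destruct (l =? r) eqn:E2.
    + apply Nat.eqb_eq in E2. subst r. destruct l as [|l'].
      * specialize (Hr 0 ltac:(lia)). unfold stepf in Hr. simpl in Hr.
        rewrite forallb_forall in Hr. specialize (Hr y0 Hy0). rewrite Nat.add_0_r in Hr.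
        pose proof (sim_out TB _ _ _ _ Hs0 Hr). congruence.
      * specialize (Hr 0 ltac:(lia)). unfold stepf in Hr. simpl in Hr.
        apply existsb_exists in Hr. destruct Hr as [h [Hh Hoh]].
        destruct (SL h Hh) as [g [Hg Hsg]].
        rewrite <- not_true_iff_false, existsb_exists in Es. apply Es. exists g. split; auto.
        eapply sim_out; eauto.
    + apply Nat.eqb_neq in E2. apply forallb_false_ex in Es. destruct Es as [g [Hg Hog]].
      destruct (SR g Hg) as [h [Hh Hsh]].
      specialize (Hr r Hr'). unfold stepf in Hr.
      destruct (l <? r) eqn:E3; [|apply Nat.ltb_ge in E3; lia].
      rewrite forallb_forall in Hr. specialize (Hr h Hh). apply andb_true_iff in Hr.
      destruct Hr as [_ Hr]. pose proof (sim_out TB _ _ _ _ Hsh Hr). congruence.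
Qed.

Lemma in_gadd_list {A B} (f : A -> B) (g : A -> B) l1 l2 y :
  In y (map f l1 ++ map g l2) -> (exists x, In x l1 /\ y = f x) \/ (exists x, In x l2 /\ y = g x).
Proof.
  intros H. apply in_app_or in H. destruct H as [H|H]; apply in_map_iff in H; destruct H as [x [<- Hx]]; eauto.
Qed.

Lemma claimR TB GL GR HL HR :
  (forall g, In g GL -> exists h, In h HL /\ sim h g) ->
  (forall h, In h HR -> (exists g, In g GR /\ sim h g) \/
     (forall X p m q m', outcome TB (gadd (Game GL GR) X) p m = true -> p <= q ->
        (m = true -> m' = true) -> outcome TB (gadd h X) q m' = true)) ->
  forall X p m, outcome TB (gadd (Game GL GR) X) p m = true -> outcome TB (gadd (Game HL HR) X) p m = true.
Proof.
  intros CL CR X. induction X as [XL XR IXL IXR] using game_ind'. intros p m Ho.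
  pose proof Ho as Ho0. rewrite gadd_eq in Ho |- *. rewrite out_true in Ho |- *.
  destruct Ho as [l [Hl Hr]]. exists l. split; auto. intros r Hr'.
  eapply step_gen; [apply Hr, Hr'| |].
  - intros g m' Hg Hog. apply in_gadd_list in Hg. destruct Hg as [[x [Hx ->]]|[x [Hx ->]]].
    + destruct (CL x Hx) as [h [Hh Hs]]. exists (gadd h (Game XL XR)). split.
      * apply in_or_app; left; apply in_map_iff; eauto.
      * eapply sim_out; [apply sim_add; eauto| eauto].
    + exists (gadd (Game HL HR) x). split; [apply in_or_app; right; apply in_map_iff; eauto| auto].
  - intros h m' Hh Hm Hall. apply in_gadd_list in Hh. destruct Hh as [[y [Hy ->]]|[y [Hy ->]]].
    + destruct (CR y Hy) as [[g [Hg Hs]]|K].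
      * eapply sim_out; [apply sim_add; eauto|]. apply Hall. apply in_or_app; left; apply in_map_iff; eauto.
      * eapply K; [exact Ho0| lia| exact Hm].
    + apply IXR; auto. apply Hall. apply in_or_app; right; apply in_map_iff; eauto.
Qed.

Lemma claimL TB GL GR HL HR :
  (forall g, In g GR -> exists h, In h HR /\ sim g h) ->
  (forall h, In h HL -> (exists g, In g GL /\ sim g h) \/
     (forall X p m q m', outcome TB (gadd h X) q m' = true -> q <= p ->
        (m' = true -> m = true) -> outcome TB (gadd (Game GL GR) X) p m = true)) ->
  forall X p m, outcome TB (gadd (Game HL HR) X) p m = true -> outcome TB (gadd (Game GL GR) X) p m = true.
Proof.
  intros CR CL X. induction X as [XL XR IXL IXR] using game_ind'. intros p m Ho.
  destruct (outcome TB (gadd (Game GL GR) (Game XL XR)) p m) eqn:E; auto. exfalso.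
  pose proof E as E0.
  rewrite gadd_eq in E, Ho. rewrite out_true in Ho. destruct Ho as [l [Hl Hr]].
  destruct (out_false _ _ _ _ _ E l Hl) as [r [Hr' Es]].
  assert (stepf (outcome TB) (map (fun g => gadd g (Game XL XR)) HL ++ map (fun h => gadd (Game HL HR) h) XL)
            (map (fun g => gadd g (Game XL XR)) HR ++ map (fun h => gadd (Game HL HR) h) XR) p m l r = false).
  2:{ rewrite Hr in H by exact Hr'. discriminate. }
  eapply step_gen_false; [exact Es| |].
  - intros g m' Hg Hog. apply in_gadd_list in Hg. destruct Hg as [[x [Hx ->]]|[x [Hx ->]]].
    + destruct (CR x Hx) as [h [Hh Hs]]. exists (gadd h (Game XL XR)). split.
      * apply in_or_app; left; apply in_map_iff; eauto.
      * apply not_true_iff_false. intros Hc.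
        pose proof (sim_out _ _ _ _ _ (sim_add _ _ (Game XL XR) Hs) Hc). congruence.
    + exists (gadd (Game HL HR) x). split; [apply in_or_app; right; apply in_map_iff; eauto|].
      apply not_true_iff_false. intros Hc. pose proof (IXR x Hx _ _ Hc). congruence.
  - intros h m' Hh Hm Hall. apply not_true_iff_false. intros Hc.
    apply in_gadd_list in Hh. destruct Hh as [[y [Hy ->]]|[y [Hy ->]]].
    + destruct (CL y Hy) as [[g [Hg Hs]]|K].
      * pose proof (sim_out _ _ _ _ _ (sim_add _ _ (Game XL XR) Hs) Hc).
        rewrite Hall in H; [discriminate|]. apply in_or_app; left; apply in_map_iff; eauto.
      * pose proof (K _ p m _ _ Hc ltac:(lia) Hm). congruence.
    + pose proof (IXL y Hy _ _ Hc). rewrite Hall in H; [discriminate|].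
      apply in_or_app; right; apply in_map_iff; eauto.
Qed.

Lemma KR TB k : forall X p m q m', outcome TB (gadd (nat_game k) X) p m = true -> p <= q ->
  (m = true -> m' = true) -> outcome TB (gadd (nat_game (S k)) X) q m' = true.
Proof.
  intros [XL XR] p m q m' Ho Hpq Hm.
  assert (Hs := sim_add _ _ (Game XL XR) (sim_nat k)).
  destruct m, m'.
  - eapply mono; [exact Hpq|]. eapply sim_out; eauto.
  - discriminate (Hm eq_refl).
  - eapply mono; [exact Hpq|].
    change (nat_game (S k)) with (Game [nat_game k] []) in *. rewrite gadd_eq in *.
    eapply L2gen; [exact Hs| |exact Ho].
    exists (gadd (nat_game k) (Game XL XR)). split; [simpl; auto| apply sim_refl].
  - eapply mono; [exact Hpq|]. eapply sim_out; eauto.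
Qed.

Lemma KL TB k : forall X p m q m', outcome TB (gadd (conjg (nat_game (S k))) X) q m' = true -> q <= p ->
  (m' = true -> m = true) -> outcome TB (gadd (conjg (nat_game k)) X) p m = true.
Proof.
  intros [XL XR] p m q m' Ho Hpq Hm.
  assert (Hs := sim_add _ _ (Game XL XR) (sim_conj k)).
  destruct m, m'.
  - eapply mono; [exact Hpq|]. eapply sim_out; eauto.
  - eapply mono; [exact Hpq|].
    change (conjg (nat_game (S k))) with (Game [] [conjg (nat_game k)]) in *. rewrite gadd_eq in Hs, Ho.
    eapply L2R; [exact Hs| |exact Ho].
    exists (gadd (conjg (nat_game k)) (Game XL XR)). split; [simpl; auto| apply sim_refl].
  - discriminate (Hm eq_refl).
  - eapply mono; [exact Hpq|]. eapply sim_out; eauto.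
Qed.

Lemma int_nat k : int_game (Z.of_nat k) = nat_game k.
Proof. destruct k; simpl; auto. rewrite SuccNat2Pos.id_succ. reflexivity. Qed.

Lemma int_neg k : int_game (- Z.of_nat k) = conjg (nat_game k).
Proof. destruct k; simpl; auto. rewrite SuccNat2Pos.id_succ. reflexivity. Qed.

Lemma sim_ge TB G H : sim G H -> game_ge TB G H.
Proof. intros Hs X p m _ Ho. eapply sim_out; [apply sim_add; exact Hs| exact Ho]. Qed.

Theorem mainTheorem16 (TB : nat) (n : Z) :
  game_eq TB (int_game n)
    (Game [int_game (n - 1)%Z] [int_game (n + 1)%Z]).
Proof.
  destruct (Z_le_gt_dec 0 n) as [Hn|Hn].
  - destruct (Z.to_nat n) as [|j] eqn:E.
    + assert (n = 0%Z) by lia. subst n. simpl.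
      split.
      * intros X p m _ Ho. change (Game [] []) with (Game [] []).
        eapply (claimL TB [] [] [conjg (nat_game 1)] [nat_game 1]); [| |exact Ho].
        -- intros g [].
        -- intros h [<-|[]]. right. intros X' p' m' q m'' H1 H2 H3.
           exact (KL TB 0 X' p' m' q m'' H1 H2 H3).
      * intros X p m _ Ho.
        eapply (claimR TB [] [] [conjg (nat_game 1)] [nat_game 1]); [| |exact Ho].
        -- intros g [].
        -- intros h [<-|[]]. right. intros X' p' m' q m'' H1 H2 H3.
           exact (KR TB 0 X' p' m' q m'' H1 H2 H3).
    + assert (n = Z.of_nat (S j)) by lia. subst n.
      replace (Z.of_nat (S j) - 1)%Z with (Z.of_nat j) by lia.
      replace (Z.of_nat (S j) + 1)%Z with (Z.of_nat (S (S j))) by lia.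
      rewrite !int_nat. split.
      * apply sim_ge. simpl. constructor.
        -- intros h [<-|[]]. exists (nat_game j). simpl. split; auto. apply sim_refl.
        -- intros g [].
      * intros X p m _ Ho.
        eapply (claimR TB [nat_game j] [] [nat_game j] [nat_game (S (S j))]); [| |exact Ho].
        -- intros g [<-|[]]. exists (nat_game j). simpl. split; auto. apply sim_refl.
        -- intros h [<-|[]]. right. intros X' p' m' q m'' H1 H2 H3.
           exact (KR TB (S j) X' p' m' q m'' H1 H2 H3).
  - destruct (Z.to_nat (- n)) as [|j] eqn:E; [lia|].
    assert (n = - Z.of_nat (S j))%Z by lia. subst n.
    replace (- Z.of_nat (S j) - 1)%Z with (- Z.of_nat (S (S j)))%Z by lia.
    replace (- Z.of_nat (S j) + 1)%Z with (- Z.of_nat j)%Z by lia.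
    rewrite !int_neg. split.
    + intros X p m _ Ho.
      eapply (claimL TB [] [conjg (nat_game j)] [conjg (nat_game (S (S j)))] [conjg (nat_game j)]); [| |exact Ho].
      * intros g [<-|[]]. exists (conjg (nat_game j)). simpl. split; auto. apply sim_refl.
      * intros h [<-|[]]. right. intros X' p' m' q m'' H1 H2 H3.
        exact (KL TB (S j) X' p' m' q m'' H1 H2 H3).
    + apply sim_ge. simpl. constructor.
      * intros h [].
      * intros g [<-|[]]. exists (conjg (nat_game j)). simpl. split; auto. apply sim_refl.
Qed.
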